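(* Let $P$ be an NL poset on $X_n$. For any NL poset $P'$ on $X_{n+1}$ whose restriction to $X_n$ is $P$, there is a unique order ideal $S$ of $P$ such that $\mathrm{Grow}_S(\mathcal I(P))=\mathcal I(P')$.
   Context: Let $X_n=\{0,1,\ldots,n-1\}$. A naturally labeled (NL) poset on $X_n$ is a partial order $\preceq$ on $X_n$ such that $x\preceq y$ implies $x\le y$ in the usual integer order. $\mathcal I(P)$ denotes the set of order ideals (downward closed subsets) of $P$. For a family $T$ of subsets of $X_n$ (closed under union and intersection, containing $\emptyset$ and $X_n$) and $S\in T$, $\mathrm{Grow}_S(T)=T\cup\{U\cup\{n\}: U\in T,\ S\subseteq U\}$, a family of subsets of $X_{n+1}$. *)

(* Defs.v *)
(* X_n = {0,...,n-1} is represented by the ordinal type 'I_n. *)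
From mathcomp Require Import all_boot.
Set Implicit Arguments. Unset Strict Implicit. Unset Printing Implicit Defensive.

Definition NL_poset (n : nat) (R : rel 'I_n) : Prop :=
  [/\ reflexive R, antisymmetric R, transitive R &
      forall x y : 'I_n, R x y -> (x <= y)%N].

Definition order_ideal (n : nat) (R : rel 'I_n) (U : {set 'I_n}) : bool :=
  [forall x, forall y, ((y \in U) && R x y) ==> (x \in U)].

Definition ideals (n : nat) (R : rel 'I_n) : {set {set 'I_n}} :=
  [set U | order_ideal R U].

Definition incl (n : nat) : 'I_n -> 'I_n.+1 := widen_ord (leqnSn n).

Definition liftS (n : nat) (U : {set 'I_n}) : {set 'I_n.+1} := @incl n @: U.

(* Grow_S(T) = T ∪ { U ∪ {n} : U ∈ T, S ⊆ U }, as a family of subsets of X_{n+1}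
   (ord_max is the element n of 'I_n.+1). *)
Definition Grow (n : nat) (S : {set 'I_n}) (T : {set {set 'I_n}})
  : {set {set 'I_n.+1}} :=
  (@liftS n @: T) :|: [set ord_max |: liftS U | U in T & S \subset U].

Definition restricts_to (n : nat) (P' : rel 'I_n.+1) (P : rel 'I_n) : Prop :=
  forall x y : 'I_n, P' (@incl n x) (@incl n y) = P x y.

(* Main.v *)
Require Import Defs.
From mathcomp Require Import all_boot.
Set Implicit Arguments. Unset Strict Implicit. Unset Printing Implicit Defensive.

Lemma oidP (n : nat) (R : rel 'I_n) (U : {set 'I_n}) :
  reflect (forall x y, y \in U -> R x y -> x \in U) (order_ideal R U).
Proof.
apply: (iffP forallP) => [H x y yU Rxy | H x].
  by have /forallP /(_ y) := H x; rewrite yU Rxy.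
by apply/forallP => y; apply/implyP => /andP [yU Rxy]; apply: H Rxy.
Qed.

Lemma splitI (n : nat) (y : 'I_n.+1) : y = ord_max \/ exists x, y = incl x.
Proof.
case: (ltnP y n) => h.
  by right; exists (Ordinal h); apply: val_inj.
by left; apply: val_inj => /=; apply/eqP; rewrite eqn_leq h -ltnS ltn_ord.
Qed.

Lemma incl_inj (n : nat) : injective (@incl n).
Proof. by move=> x y /(congr1 val) /= h; apply: val_inj. Qed.

Lemma mem_liftS (n : nat) (U : {set 'I_n}) x : (incl x \in liftS U) = (x \in U).
Proof. by exact: (mem_imset _ _ (@incl_inj n)). Qed.

Lemma max_liftS (n : nat) (U : {set 'I_n}) : (ord_max \notin liftS U).
Proof.
apply/imsetP => -[x _ /(congr1 val) /= h].
by have := ltn_ord x; rewrite -h ltnn.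
Qed.

Lemma incl_neq_max (n : nat) (x : 'I_n) : (incl x == ord_max) = false.
Proof. by apply/negbTE/negP => /eqP /(congr1 val) /= h; have := ltn_ord x; rewrite h ltnn. Qed.

Lemma pre_eq (n : nat) (V : {set 'I_n.+1}) :
  V = (if ord_max \in V then ord_max |: liftS [set x | incl x \in V]
       else liftS [set x | incl x \in V]).
Proof.
apply/setP => y; case: (splitI y) => [->|[x ->]].
  by case h: (ord_max \in V); rewrite ?setU11 // (negbTE (max_liftS _)).
by case: ifP => _; rewrite ?in_setU1 ?incl_neq_max mem_liftS inE.
Qed.

Theorem theorem5p10 (n : nat) (P : rel 'I_n) (P' : rel 'I_n.+1) :
  NL_poset P -> NL_poset P' -> restricts_to P' P ->
  exists! S : {set 'I_n}, S \in ideals P /\ Grow S (ideals P) = ideals P'.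
Proof.
move=> [Pr Pa Pt Pl] [P'r P'a P't P'l] Hres.
have maxx : forall x : 'I_n, P' ord_max (incl x) = false.
  move=> x; apply/negP => /P'l /=; rewrite leqNgt ltn_ord //.
set S := [set x : 'I_n | P' (incl x) ord_max].
have SI : S \in ideals P.
  rewrite inE; apply/oidP => x y; rewrite !inE => h1 h2.
  by apply: P't h1; rewrite Hres.
have liftI : forall U, U \in ideals P -> liftS U \in ideals P'.
  move=> U; rewrite !inE => /oidP HU; apply/oidP => x y.
  case: (splitI y) => [->|[y' ->]]; first by rewrite (negbTE (max_liftS _)).
  case: (splitI x) => [->|[x' ->]]; first by rewrite maxx.
  by rewrite !mem_liftS Hres; apply: HU.
have liftI2 : forall U, U \in ideals P -> S \subset U ->
    ord_max |: liftS U \in ideals P'.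
  move=> U UI SU; have := liftI U UI; rewrite !inE => /oidP HU.
  apply/oidP => x y; rewrite !in_setU1.
  case/orP => [/eqP ->|yU Rxy]; last by rewrite (HU x y yU Rxy) orbT.
  case: (splitI x) => [->|[x' ->]]; first by rewrite eqxx.
  move=> Rx; rewrite mem_liftS (subsetP SU) ?orbT // inE //.
have GS : Grow S (ideals P) = ideals P'.
  apply/setP => V; apply/idP/idP.
    case/setUP => /imsetP [U]; last first.
      by rewrite inE => /andP [UI SU] ->; apply: liftI2.
    by move=> UI ->; apply: liftI.
  move=> VI; rewrite [V]pre_eq; set U := [set x | incl x \in V].
  have /oidP HV : order_ideal P' V by move: VI; rewrite inE.
  have UI : U \in ideals P.
    rewrite inE; apply/oidP => x y; rewrite !inE => yU Rxy.
    by apply: HV yU _; rewrite Hres.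
  case: ifP => Vm; last by apply/setUP; left; apply: imset_f.
  apply/setUP; right; apply/imsetP; exists U => //.
  rewrite inE UI /=; apply/subsetP => x; rewrite !inE => Rx.
  exact: HV Vm Rx.
exists S; split => // S' [S'I GS'].
apply/setP => x; apply/idP/idP.
  move=> xS.
  have : ord_max |: liftS S' \in ideals P'.
    by rewrite -GS'; apply/setUP; right; apply: imset_f; rewrite inE S'I subxx.
  rewrite inE => /oidP /(_ (incl x) ord_max) .
  by rewrite setU11 in_setU1 incl_neq_max mem_liftS; move: xS; rewrite inE => h; apply.
move=> xS'.
have : ord_max |: liftS S \in ideals P' by apply: liftI2.
rewrite -GS' => /setUP [/imsetP [U _ /setP /(_ ord_max)]|/imsetP [U]].
  by rewrite setU11 (negbTE (max_liftS _)).
rewrite inE => /andP [_ S'U] E.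
have -> : S = U.
  apply/setP => z; move/setP: E => /(_ (incl z)).
  by rewrite !in_setU1 incl_neq_max !mem_liftS.
exact: (subsetP S'U).
Qed.
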